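(* For a set $\mathcal{R}$ of languages over $\Sigma$ and a regular language $R\subseteq\Sigma^*$ let $\mathcal{R}\,\dot-\,R=\{L\setminus R\mid L\in\mathcal{R}\}$. (1) There exist a rational set of regular languages $\mathcal{R}$ and a regular $R$ such that $\mathcal{R}\,\dot-\,R$ is not a rational set of regular languages. (2) If $\mathcal{R}$ is a finite rational set of regular languages and $R$ is regular, then $\mathcal{R}\,\dot-\,R$ is a finite rational set of regular languages. (3) In the latter case a different language substitution is in general required: there exist an alphabet $\Delta$, a regular language substitution $\varphi:\Delta\to2^{\Sigma^*}$, a regular $K\subseteq\Delta^+$ with $\mathcal{R}=(K,\varphi)$ finite, and a regular $R\subseteq\Sigma^*$ such that there is no regular $K'\subseteq\Delta^+$ with $\mathcal{R}\,\dot-\,R=(K',\varphi)$.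
   Context: Alphabets are nonempty finite sets. A regular language substitution $\varphi:\Delta\to2^{\Sigma^*}$ maps each symbol to a regular language over $\Sigma$, extended by $\varphi(\delta w)=\varphi(\delta)\varphi(w)$. A set $\mathcal{R}$ of regular languages over $\Sigma$ is a rational set of regular languages, written $\mathcal{R}=(K,\varphi)$, if there are an alphabet $\Delta$, a regular $K\subseteq\Delta^+$ and a regular language substitution $\varphi$ with $\mathcal{R}=\{\varphi(w)\mid w\in K\}$. *)

(* Defs.v *)
From mathcomp Require Import all_boot.
Set Implicit Arguments. Unset Strict Implicit. Unset Printing Implicit Defensive.

Definition lang (A : finType) := seq A -> Prop.

Definition lang_eq (A : finType) (L1 L2 : lang A) : Prop := forall w, L1 w <-> L2 w.

Definition regular (A : finType) (L : lang A) : Prop :=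
  exists (Q : finType) (q0 : Q) (d : Q -> A -> Q) (F : pred Q),
    forall w, L w <-> F (foldl d q0 w).

Definition eps_lang (A : finType) : lang A := fun w => w = [::].

Definition conc (A : finType) (L1 L2 : lang A) : lang A :=
  fun w => exists u v, [/\ w = u ++ v, L1 u & L2 v].

Definition subst_word (D A : finType) (phi : D -> lang A) (w : seq D) : lang A :=
  foldr (fun d acc => conc (phi d) acc) (@eps_lang A) w.

(* Sets of languages: predicates on languages (intended up to lang_eq). *)
Definition langset (A : finType) := lang A -> Prop.

Definition gen (D A : finType) (K : lang D) (phi : D -> lang A) : langset A :=
  fun L => exists2 w, K w & lang_eq L (subst_word phi w).

Definition regular_subst (D A : finType) (phi : D -> lang A) : Prop :=
  forall d, regular (phi d).

Definition regular_plus (D : finType) (K : lang D) : Prop :=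
  regular K /\ (forall w, K w -> w <> [::]).

Definition rational_set (A : finType) (calR : langset A) : Prop :=
  exists (D : finType) (K : lang D) (phi : D -> lang A),
    [/\ 0 < #|D|, regular_plus K, regular_subst phi &
        forall L, calR L <-> gen K phi L].

Definition finite_langset (A : finType) (calR : langset A) : Prop :=
  exists (n : nat) (f : 'I_n -> lang A),
    forall L, calR L <-> exists i, lang_eq L (f i).

Definition minus_set (A : finType) (calR : langset A) (R : lang A) : langset A :=
  fun L => exists2 L', calR L' & lang_eq L (fun w => L' w /\ ~ R w).

(* Main.v *)
Require Import Defs.
From mathcomp Require Import all_boot.
From Stdlib Require Import ClassicalEpsilon Lia.
From mathcomp Require Import zify.
Set Implicit Arguments. Unset Strict Implicit. Unset Printing Implicit Defensive.

Lemma regular_eq (A : finType) (L1 L2 : lang A) :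
  regular L1 -> lang_eq L1 L2 -> regular L2.
Proof.
move=> [Q [q0 [d [F H]]]] E; exists Q, q0, d, F => w.
split=> [/E/H // | /H/E //].
Qed.

Lemma foldl_true (A : finType) (w : seq A) :
  foldl (fun (_ : bool) (_ : A) => true) true w = true.
Proof. by elim: w. Qed.

Lemma regular_eps (A : finType) : regular (@eps_lang A).
Proof.
exists bool, false, (fun _ _ => true), (fun b : bool => ~~ b) => w.
by case: w => [|x w] /=; rewrite ?foldl_true /eps_lang.
Qed.

Lemma regular_nonempty (A : finType) : regular (fun w : seq A => w <> [::]).
Proof.
exists bool, false, (fun _ _ => true), (fun b : bool => b) => w.
by case: w => [|x w] /=; rewrite ?foldl_true.
Qed.

Lemma foldl_tt (A : finType) (w : seq A) :
  foldl (fun (q : bool * bool) (_ : A) => (true, q.1)) (true, true) w = (true, true).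
Proof. by elim: w. Qed.

Lemma regular_size1 (A : finType) : regular (fun w : seq A => size w = 1).
Proof.
exists ((bool * bool)%type), (false, false),
  (fun (q : bool * bool) (_ : A) => (true, q.1)), (fun q : bool * bool => q.1 && ~~ q.2) => w.
case: w => [|x [|y w]] //=; rewrite foldl_tt //.
Qed.

Lemma regular_diff (A : finType) (L R : lang A) :
  regular L -> regular R -> regular (fun w => L w /\ ~ R w).
Proof.
move=> [Q1 [p1 [d1 [F1 H1]]]] [Q2 [p2 [d2 [F2 H2]]]].
exists ((Q1 * Q2)%type), (p1, p2), (fun q c => (d1 q.1 c, d2 q.2 c)),
  (fun q => F1 q.1 && ~~ F2 q.2) => w.
have E : forall q, foldl (fun q c => (d1 q.1 c, d2 q.2 c)) q w = (foldl d1 q.1 w, foldl d2 q.2 w).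
  by elim: w => [|c w IH] [a b] //=; rewrite IH.
rewrite E /=; split.
  by case=> /H1 -> HR; apply/negP => /H2.
by case/andP=> /H1 ? /negP HR; split => // /H2.
Qed.

Section Conc.
Variables (A Q1 Q2 : finType) (q1 : Q1) (d1 : Q1 -> A -> Q1) (F1 : pred Q1)
  (q2 : Q2) (d2 : Q2 -> A -> Q2) (F2 : pred Q2).

Definition S0 : {set Q2} := if F1 q1 then [set q2] else set0.
Definition cstep (p : Q1 * {set Q2}) (c : A) : Q1 * {set Q2} :=
  (d1 p.1 c, [set d2 q c | q in p.2] :|: (if F1 (d1 p.1 c) then [set q2] else set0)).

Lemma cinv w :
  (foldl cstep (q1, S0) w).1 = foldl d1 q1 w /\
  (forall q, q \in (foldl cstep (q1, S0) w).2 <->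
    exists u v, [/\ w = u ++ v, F1 (foldl d1 q1 u) & q = foldl d2 q2 v]).
Proof.
elim/last_ind: w => [|w c [IH1 IH2]].
  split=> // q /=; rewrite /S0; split.
    by case: ifP => H; rewrite ?in_set0 // in_set1 => /eqP ->; exists [::], [::].
  case=> [[|x u] [[|y v] [//= _ H ->]]]; by rewrite H in_set1.
rewrite !foldl_rcons /=; split; first by rewrite IH1.
move=> q; rewrite in_setU IH1; split.
  case/orP.
    case/imsetP=> q0 Hq0 ->; have [u [v [-> Hu ->]]] := (IH2 q0).1 Hq0.
    by exists u, (rcons v c); rewrite rcons_cat foldl_rcons.
  case: ifP => H; rewrite ?in_set0 // in_set1 => /eqP ->.
  by exists (rcons w c), [::]; rewrite cats0 foldl_rcons.
case=> u [v []]; case/lastP: v => [|v c'].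
  rewrite cats0 => <- Hu ->; apply/orP; right.
  by rewrite -foldl_rcons Hu in_set1.
rewrite -rcons_cat => /rcons_inj [Ew <-] Hu ->; apply/orP; left.
rewrite foldl_rcons; apply: imset_f; apply: (proj2 (IH2 _)); by exists u, v.
Qed.
End Conc.

Lemma regular_conc (A : finType) (L1 L2 : lang A) :
  regular L1 -> regular L2 -> regular (conc L1 L2).
Proof.
move=> [Q1 [p1 [d1 [F1 H1]]]] [Q2 [p2 [d2 [F2 H2]]]].
exists ((Q1 * {set Q2})%type), (p1, S0 p1 F1 p2), (cstep d1 F1 p2 d2),
  (fun p : Q1 * {set Q2} => [exists q in p.2, F2 q]) => w.
have [_ I] := cinv p1 d1 F1 p2 d2 w.
split.
  case=> u [v [Ew /H1 Hu /H2 Hv]]; apply/existsP; exists (foldl d2 p2 v).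
  rewrite Hv andbT; apply: (proj2 (I _)); by exists u, v.
case/existsP=> q /andP [Hq Hv]; have [u [v [Ew Hu Eq]]] := proj1 (I q) Hq; subst q.
by exists u, v; split => //; [apply/H1 | apply/H2].
Qed.

Lemma regular_subst_word (D A : finType) (phi : D -> lang A) w :
  regular_subst phi -> regular (subst_word phi w).
Proof.
move=> Hp; elim: w => [|d w IH] /=; first exact: regular_eps.
exact: regular_conc.
Qed.

Definition oneL (A : finType) : unit -> lang A := fun _ u => size u = 1.

Lemma subst_one (A : finType) (w : seq unit) (u : seq A) :
  subst_word (@oneL A) w u <-> size u = size w.
Proof.
elim: w u => [|d w IH] u /=.
  rewrite /eps_lang; split; [by move-> | by move/eqP; rewrite size_eq0 => /eqP].
split.
  case=> x [v [-> Hx /IH Hv]]; by rewrite size_cat Hx Hv.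
case: u => [|x u] //= [Hu]; exists [:: x], u; split => //; exact/IH.
Qed.

Lemma subst1 (D A : finType) (phi : D -> lang A) d :
  lang_eq (subst_word phi [:: d]) (phi d).
Proof.
move=> w /=; split.
  by case=> u [v [-> Hu ->]]; rewrite cats0.
by move=> H; exists w, [::]; rewrite cats0.
Qed.

Definition T (n : nat) : lang bool := fun w => size w = n /\ sorted implb w.

Lemma not_sorted (u v : seq bool) :
  all (pred1 true) u -> all (pred1 false) v -> u != [::] -> v != [::] ->
  ~~ sorted implb (u ++ v).
Proof.
case: u => [|x u] //; case: v => [|y v] // Hu Hv _ _.
rewrite /= cat_path negb_and; apply/orP; right.
have /eqP -> : last x u == true by move/allP: Hu; apply; exact: mem_last.
by move: Hv => /= /andP [/eqP ->].
Qed.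

Lemma allnseq (b : bool) n u v : u ++ v = nseq n b -> all (pred1 b) u /\ all (pred1 b) v.
Proof. by move=> E; have := all_pred1_nseq b n; rewrite -E all_cat => /andP. Qed.

Lemma split_T n (A B : lang bool) : 0 < n -> lang_eq (T n) (conc A B) ->
  lang_eq (T n) B \/ lang_eq (T n) A.
Proof.
move=> n0 H.
have Tf : T n (nseq n false) by split; [rewrite size_nseq | elim: n {n0 H} => [|[|] ] //= [|k]].
have Tt : T n (nseq n true) by split; [rewrite size_nseq | elim: n {n0 H Tf} => [|[|] ] //= [|k]].
have [u1 [v1 [e1 A1 B1]]] := proj1 (H _) Tf.
have [u2 [v2 [e2 A2 B2]]] := proj1 (H _) Tt.
have [s12 _] : T n (u1 ++ v2) by apply: (proj2 (H _)); exists u1, v2.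
have [s21 so21] : T n (u2 ++ v1) by apply: (proj2 (H _)); exists u2, v1.
have z1 : size u1 + size v1 = n by rewrite -size_cat -e1 size_nseq.
have z2 : size u2 + size v2 = n by rewrite -size_cat -e2 size_nseq.
rewrite size_cat in s12 s21.
have [au2 _] := allnseq (esym e2).
have [_ av1] := allnseq (esym e1).
case: (eqVneq u2 [::]) => [eu2|nu2].
  have eu1 : u1 = [::] by apply/eqP; rewrite -size_eq0; move: s21 s12 z1 z2; rewrite eu2 /=; lia.
  left => w; split.
    move=> Hw; have [u [v [Ew Au Bv]]] := proj1 (H _) Hw; subst w.
    have [su _] : T n (u ++ v1) by apply: (proj2 (H _)); exists u, v1.
    rewrite size_cat in su; have : size u = 0 by move: su s21; rewrite eu2 /=; lia.
    by move/eqP; rewrite size_eq0 => /eqP ->.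
  by move=> Bw; apply: (proj2 (H _)); exists [::], w; split => //; rewrite -eu1.
case: (eqVneq v1 [::]) => [ev1|nv1]; last first.
  by move: so21; rewrite (negbTE (not_sorted au2 av1 nu2 nv1)).
have ev2 : v2 = [::] by apply/eqP; rewrite -size_eq0; move: s21 s12 z1 z2; rewrite ev1 /=; lia.
right => w; split.
  move=> Hw; have [u [v [Ew Au Bv]]] := proj1 (H _) Hw; subst w.
  have [sv _] : T n (u1 ++ v) by apply: (proj2 (H _)); exists u1, v.
  rewrite size_cat in sv; have : size v = 0 by move: sv z1; rewrite ev1 /=; lia.
  by move/eqP; rewrite size_eq0 => /eqP ->; rewrite cats0.
by move=> Aw; apply: (proj2 (H _)); exists w, [::]; split => //; rewrite ?cats0 // -ev2.
Qed.

Lemma decomp (D : finType) (phi : D -> lang bool) n w : 0 < n ->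
  lang_eq (T n) (subst_word phi w) -> exists d, lang_eq (T n) (phi d).
Proof.
move=> n0; elim: w => [|d w IH] /= H.
  have [_ so] : T n (nseq n false) by split; [rewrite size_nseq | elim: n {n0 H} => [|[|] ] //= [|k]].
  have [E _] := H (nseq n false).
  have := E (conj (size_nseq n false) so); rewrite /eps_lang => /eqP.
  by rewrite -size_eq0 size_nseq => /eqP E0; move: n0; rewrite E0.
case: (split_T n0 H) => [/IH //| Hd]; by exists d.
Qed.

Definition Rb : lang bool := fun w => ~~ sorted implb w.

Lemma regular_Rb : regular Rb.
Proof.
exists (bool * bool)%type, (false, false),
  (fun (q : bool * bool) c => (q.1 || (q.2 && ~~ c), c)), (fun q : bool * bool => q.1) => w.
have E : forall b l, (foldl (fun (q : bool * bool) c => (q.1 || (q.2 && ~~ c), c)) (b, l) w).1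
   = b || ~~ path implb l w.
  elim: w => [|c w IH] b l /=; first by rewrite orbF.
  by rewrite IH; case: b; case: l; case: c.
rewrite E /Rb /=; case: w {E} => [|c w] //=.
Qed.

Lemma part1 : exists (S : finType) (calR : langset S) (R : lang S),
     [/\ 0 < #|S|, rational_set calR, regular R &
         ~ rational_set (minus_set calR R)].
Proof.
exists (bool : finType), (gen (fun w : seq unit => w <> [::]) (@oneL bool)), Rb; split.
- by rewrite card_bool.
- exists (unit : finType), (fun w : seq unit => w <> [::]), (@oneL bool); split => //.
  + by rewrite card_unit.
  + split; [exact: regular_nonempty | by []].
  + move=> d; exact: regular_size1.
- exact: regular_Rb.
move=> [D' [K' [phi' [_ _ _ Hiff]]]].
have Hd : forall n, exists d, lang_eq (T n.+1) (phi' d).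
  move=> n.
  have M : minus_set (gen (fun w : seq unit => w <> [::]) (@oneL bool)) Rb (T n.+1).
    exists (subst_word (@oneL bool) (nseq n.+1 tt)).
      by exists (nseq n.+1 tt) => //.
    move=> w; rewrite subst_one size_nseq /T /Rb; split.
      by case=> -> ->.
    by case=> -> /negP; case: (sorted implb w).
  have [w _ Hw] := proj1 (Hiff _) M.
  exact: decomp Hw.
pose f n := proj1_sig (constructive_indefinite_description _ (Hd n)).
have Hf n : lang_eq (T n.+1) (phi' (f n)) := proj2_sig (constructive_indefinite_description _ (Hd n)).
pose g (i : 'I_(#|D'|.+1)) := f i.
have ginj : injective g.
  move=> i j E; apply: val_inj => /=.
  have : T j.+1 (nseq i.+1 false).
    apply: (proj2 (Hf j _)); rewrite /g in E; rewrite -E; apply: (proj1 (Hf i _)).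
    by split; [rewrite size_nseq | elim: (i : nat) => [|[|k]] ].
  by rewrite /T size_nseq => [[[]]].
by have := leq_card g ginj; rewrite card_ord ltnn.
Qed.

Lemma fin_rational (S : finType) n (g : 'I_n -> lang S) :
  (forall i, regular (g i)) -> rational_set (fun L => exists i, lang_eq L (g i)).
Proof.
case: n g => [|n] g Hg.
  exists (unit : finType), (fun _ => False), (oneL (A:=S)); split.
  - by rewrite card_unit.
  - split => //; exists (unit : finType), tt, (fun _ _ => tt), pred0 => w; by split.
  - move=> d; exact: regular_size1.
  - by move=> L; split; [case=> -[] | case].
exists ('I_n.+1 : finType), (fun w : seq 'I_n.+1 => size w = 1), g; split.
- by rewrite card_ord.
- split; [exact: regular_size1 | by case].
- exact: Hg.
move=> L; split.
  case=> i Hi; exists [:: i] => // w; split => [/Hi /(subst1 g i w).2 // | /(subst1 g i w).1 /Hi //].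
case=> -[|d [|]] //= _ H; exists d => w; split => [/H /(subst1 g d w).1 // | /(subst1 g d w).2 /H //].
Qed.

Lemma part2 (S : finType) (calR : langset S) (R : lang S) :
     0 < #|S| -> rational_set calR -> finite_langset calR -> regular R ->
     rational_set (minus_set calR R) /\ finite_langset (minus_set calR R).
Proof.
move=> _ [D [K [phi [_ _ Hphi Hiff]]]] [n [f Hf]] HR.
have Rf : forall i, regular (f i).
  move=> i; have : calR (f i) by apply/(Hf _).2; exists i.
  move/(Hiff _).1 => [w _ E].
  apply: (regular_eq (regular_subst_word w Hphi)) => u; split => /E //.
pose g i := fun w => f i w /\ ~ R w.
have E : forall L, minus_set calR R L <-> exists i, lang_eq L (g i).
  move=> L; split.
    case=> L' /(Hf _).1 [i Hi] HL; exists i => w; split.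
      by move/HL => [/Hi ? ?]; split.
    by case=> /Hi ? ?; apply/HL.
  case=> i Hi; exists (f i) => //; by apply/(Hf _).2; exists i.
split; last by exists n, g.
have [D' [K' [phi' [H1 H2 H3 H4]]]] := fin_rational (fun i => regular_diff (Rf i) HR).
exists D', K', phi'; split => // L; rewrite -H4; exact: E.
Qed.

Lemma part3 : exists (S D : finType) (phi : D -> lang S) (K : lang D) (R : lang S),
     [/\ 0 < #|S| /\ 0 < #|D|, regular_subst phi /\ regular_plus K,
         finite_langset (gen K phi), regular R &
         ~ exists K' : lang D, regular_plus K' /\
             (forall L, minus_set (gen K phi) R L <-> gen K' phi L)].
Proof.
exists (unit : finType), (unit : finType), (oneL (A:=unit)), (fun w : seq unit => size w = 1),
  (fun w : seq unit => size w = 1); split.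
- by rewrite card_unit.
- split; first by move=> d; exact: regular_size1.
  by split; [exact: regular_size1 | case].
- exists 1, (fun _ => oneL tt) => L; split.
    case=> -[|d [|]] //= _ H; exists ord0 => w; split => [/H /(subst1 _ d w).1 // | /(subst1 _ d w).2 /H //].
  case=> i Hi; exists [:: tt] => // w; split => [/Hi /(subst1 _ tt w).2 // | /(subst1 _ tt w).1 /Hi //].
- exact: regular_size1.
case=> K' [_ H].
have : minus_set (gen (fun w : seq unit => size w = 1) (oneL (A:=unit)))
   (fun w : seq unit => size w = 1) (fun _ => False).
  exists (oneL tt).
    exists [:: tt] => // w; split => [/(subst1 _ tt w).2 // | /(subst1 _ tt w).1 //].
  by move=> w; split => // -[].
move/H => [w _ E].
by apply: (proj2 (E (nseq (size w) tt))); apply/subst_one; rewrite size_nseq.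
Qed.

Theorem proposition10 :
  (* (1) *)
  (exists (S : finType) (calR : langset S) (R : lang S),
     [/\ 0 < #|S|, rational_set calR, regular R &
         ~ rational_set (minus_set calR R)])
  /\
  (* (2) *)
  (forall (S : finType) (calR : langset S) (R : lang S),
     0 < #|S| -> rational_set calR -> finite_langset calR -> regular R ->
     rational_set (minus_set calR R) /\ finite_langset (minus_set calR R))
  /\
  (* (3) *)
  (exists (S D : finType) (phi : D -> lang S) (K : lang D) (R : lang S),
     [/\ 0 < #|S| /\ 0 < #|D|, regular_subst phi /\ regular_plus K,
         finite_langset (gen K phi), regular R &
         ~ exists K' : lang D, regular_plus K' /\
             (forall L, minus_set (gen K phi) R L <-> gen K' phi L)]).
Proof.
split; first exact: part1.
split; first exact: part2.
exact: part3.
Qed.
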